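(* Let $p$ be an odd prime and $b,c\in\mathbb Z$. For every integer $k$ with $-p\le k\le p$, $$(k+1)\binom{p-1}{k-1}_{b,c}-(k-1)c\binom{p-1}{k+1}_{b,c}\equiv \binom{p}{k}_{b,c}-(b^2-4c)\binom{p-2}{k}_{b,c}\pmod p.$$
   Context: For $n\in\mathbb N$ and $b,c\in\mathbb Z$, the generalized trinomial coefficients $\binom{n}{k}_{b,c}$ ($k\in\mathbb Z$) are the integers defined by $\left(x+b+\frac{c}{x}\right)^n=\sum_{k\in\mathbb Z}\binom{n}{k}_{b,c}x^k$; they vanish for $|k|>n$. *)

(* Defs.v *)
From mathcomp Require Import all_boot all_order all_algebra.
Set Implicit Arguments. Unset Strict Implicit. Unset Printing Implicit Defensive.
Import Order.TTheory GRing.Theory Num.Theory.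
Local Open Scope ring_scope.

(* Generalized trinomial coefficient [n choose k]_{b,c}: the coefficient of
   x^k in (x + b + c/x)^n.  Since x^n (x + b + c/x)^n = (x^2 + b x + c)^n,
   it is the coefficient of X^(k+n) in the polynomial (X^2 + b X + c)^n,
   and 0 when k + n < 0. *)
Definition gtrinom (n : nat) (b c : int) (k : int) : int :=
  if (0 <= k + n%:Z) then
    (('X^2 + b%:P * 'X + c%:P) ^+ n : {poly int})`_(absz (k + n%:Z))
  else 0.

(* Main.v *)
Require Import Defs.
From mathcomp Require Import all_boot all_order all_algebra.
From mathcomp Require Import ring lra zify.
Import Order.TTheory GRing.Theory Num.Theory.
Local Open Scope ring_scope.

Section Aux.
Variables b c : int.
Let Q : {poly int} := 'X^2 + b%:P * 'X + c%:P.

Lemma g0 (n : nat) (k : int) : 0 <= k + n%:Z -> gtrinom n b c k = (Q ^+ n)`_(absz (k + n%:Z)).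
Proof. by rewrite /gtrinom => ->. Qed.

Lemma g2 (n : nat) (k : int) : 0 <= k + n%:Z + 2 ->
  gtrinom n b c k = ('X^2 * Q ^+ n)`_(absz (k + n%:Z + 2)).
Proof.
move=> H; rewrite coefXnM /gtrinom; case: ifP => H2.
  case: ifP => H3; first (exfalso; move: H2 H3; lia).
  by have -> : subn (absz (k + n%:Z + 2)) 2 = absz (k + n%:Z) by lia.
by rewrite ifT //; lia.
Qed.

Lemma derQ : Q^`() = 'X *+ 2 + b%:P.
Proof. by rewrite /Q !derivE /= mul1r !mulr1 addr0 mulr2n. Qed.

Lemma XD (P : {poly int}) j : ('X * P^`())`_j = P`_j *+ j.
Proof. by rewrite coefXM; case: j => [|j] //=; rewrite coef_deriv. Qed.

Lemma PI (N : nat) :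
  let A := Q ^+ N.+1 in
  'X^2 * ('X * A^`()) - (N%:Z - 1) *: ('X^2 * A) - c *: ('X * A^`())
    + ((N%:Z + 3) * c) *: A
  = Q ^+ N.+2 - (b ^+ 2 - 4 * c) *: ('X^2 * Q ^+ N)
    + (N.+2)%:Z *: (Q ^+ N * ('X^2 - c%:P) ^+ 2).
Proof.
move=> A; rewrite /A deriv_exp derQ /=.
rewrite -!mul_polyC /Q.
rewrite ?rmorphB ?rmorphD ?rmorphM /= ?rmorphXn /= ?rmorph_nat.
rewrite !exprS.
ring.
Qed.
End Aux.

Lemma fin (b c : int) (N m : nat) (Z A B A2 B2 : int) :
  (m%:Z - (N.+2)%:Z + 1) * (if (m < 2)%N then 0 else A2) - (m%:Z - (N.+2)%:Z - 1) * c * A -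
  (B - (b ^+ 2 - 4 * c) * (if (m < 2)%N then 0 else B2)) - 
  Z * (N.+2)%:Z =
  (if (m < 2)%N then 0 else A2 *+ (m - 2)) -
  ((N%:Z) - 1) * (if (m < 2)%N then 0 else A2) - c * (A *+ m) + 
  ((N%:Z) + 3) * c * A -
  (B - (b ^+ 2 - 4 * c) * (if (m < 2)%N then 0 else B2) + (N.+2)%:Z * Z).
Proof.
rewrite -[A2 *+ _]mulr_natr -[A *+ _]mulr_natr !natz.
have -> : (N.+2)%:Z = N%:Z + 2 by rewrite -addn2 PoszD.
case: (ltnP m 2) => Hm2.
  move: (N%:Z) (m%:Z) => n mm.
  ring.
have -> : Posz (m - 2)%N = m%:Z - 2 by rewrite subzn.
move: (N%:Z) (m%:Z) => n mm.
ring.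
Qed.

Lemma helper (G R X : int) : G - R = X -> X = 0 -> G = R.
Proof. by move=> <- /eqP; rewrite subr_eq0 => /eqP. Qed.

Theorem mainTheorem8 (p : nat) (b c k : int) :
  prime p -> odd p ->
  - (p%:Z) <= k <= p%:Z ->
  ((k + 1) * gtrinom p.-1 b c (k - 1) - (k - 1) * c * gtrinom p.-1 b c (k + 1)
   = gtrinom p b c k - (b ^+ 2 - 4 * c) * gtrinom p.-2 b c k %[mod p%:Z])%Z.
Proof.
move=> pr _ /andP [Hk1 Hk2].
have p2 := prime_gt1 pr.
have [N eN] : exists N, p = N.+2 by exists p.-2; lia.
subst p => /=.
set Q : {poly int} := 'X^2 + b%:P * 'X + c%:P.
set m := absz (k + (N.+2)%:Z).
have Hm : m%:Z = k + (N.+2)%:Z by rewrite /m gez0_abs //; lia.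
rewrite (g2 b c N.+1 (k - 1)); last lia.
rewrite (g0 b c N.+1 (k + 1)); last lia.
rewrite (g0 b c N.+2 k); last lia.
rewrite (g2 b c N k); last lia.
have -> : absz (k - 1 + (N.+1)%:Z + 2) = m by lia.
have -> : absz (k + 1 + (N.+1)%:Z) = m by lia.
have -> : absz (k + (N.+2)%:Z) = m by lia.
have -> : absz (k + N%:Z + 2) = m by lia.
have := congr1 (fun P : {poly int} => P`_m) (PI b c N) => /=.
rewrite ?coefD ?coefB ?coefN ?coefZ ?coefXnM ?XD.
move=> /eqP; rewrite -subr_eq0 => /eqP E.
apply/eqP; rewrite eqz_mod_dvd.
have kE : k = m%:Z - (N.+2)%:Z by lia.
rewrite kE {Hk1 Hk2 kE Hm}; clearbody m; clear Q.
set Z := (_ * ('X^2 - c%:P) ^+ 2)`_m in E.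
set A := (_ ^+ N.+1 : {poly int})`_m in E *.
set B := (_ ^+ N.+2 : {poly int})`_m in E *.
set A2 := (_ ^+ N.+1 : {poly int})`_(m - 2) in E *.
set B2 := (_ ^+ N : {poly int})`_(m - 2) in E *.
clearbody Z A B A2 B2.
move: E.
move=> E; apply/dvdzP; exists Z; apply: helper E.
exact: fin.
Qed.
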